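(* The set of flat formulas of $\mathbf{PT}$ is closed under flat substitutions: if $\phi$ is a flat formula of $\mathbf{PT}$ and $\sigma$ is a flat substitution of $\mathbf{PT}$, then $\sigma(\phi)$ is flat.
   Context: Fix a countably infinite set Prop of propositional variables. A valuation is a function $v:\mathrm{Prop}\to\{0,1\}$; a team is a set of valuations. Formulas of $\mathbf{PT}$: $\phi::=p\mid\bot\mid\top\mid\,=\!(\phi_1,\dots,\phi_n,\phi)\mid\neg\phi\mid\phi\wedge\phi\mid\phi\otimes\phi\mid\phi\vee\phi\mid\phi\to\phi$. Satisfaction on a team $X$: $X\models p$ iff $v(p)=1$ for all $v\in X$; $X\models\bot$ iff $X=\emptyset$; $X\models\top$ always; $\wedge$ is conjunction of conditions; $X\models\phi\otimes\psi$ iff $X=Y\cup Z$ with $Y\models\phi$, $Z\models\psi$; $X\models\phi\vee\psi$ iff $X\models\phi$ or $X\models\psi$; $X\models\phi\to\psi$ iff every $Y\subseteq X$ with $Y\models\phi$ satisfies $\psi$; $X\models\neg\phi$ iff $\{v\}\not\models\phi$ for all $v\in X$; $X\models\,=\!(\phi_1,\dots,\phi_n,\psi)$ iff $X\models\bigwedge_i(\phi_i\vee(\phi_i\to\bot))\to(\psi\vee(\psi\to\bot))$. $\phi$ is flat if for all teams $X$: $X\models\phi$ iff $\{v\}\models\phi$ for all $v\in X$. A substitution is a map on formulas commuting with all connectives and atoms; it is flat if $\sigma(p)$ is flat for every $p\in\mathrm{Prop}$. *)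

(* Defs.v *)
From Stdlib Require Import List.
Import ListNotations.

(* Prop = nat (a countably infinite set of propositional variables). *)
Definition valuation := nat -> bool.
Definition team := valuation -> Prop.

Definition subteam (Y X : team) : Prop := forall v, Y v -> X v.
Definition singleton (v : valuation) : team := fun w => w = v.

Inductive form : Type :=
| Var : nat -> form
| Bot : form
| Top : form
| Dep : list form -> form -> form
| Neg : form -> form
| And : form -> form -> form
| Tensor : form -> form -> form
| Or : form -> form -> form          (* intuitionistic disjunction *)
| Imp : form -> form -> form.

Fixpoint sat (f : form) (X : team) {struct f} : Prop :=
  match f with
  | Var p => forall v, X v -> v p = true
  | Bot => forall v, ~ X v
  | Top => True
  | Dep l g =>
      (* X |= /\_i (phi_i \/ (phi_i -> bot)) -> (g \/ (g -> bot)) *)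
      forall Y, subteam Y X ->
        (fix all_dec (l : list form) : Prop :=
           match l with
           | [] => True
           | h :: l' =>
               (sat h Y \/ (forall Z, subteam Z Y -> sat h Z -> forall v, ~ Z v))
               /\ all_dec l'
           end) l ->
        (sat g Y \/ (forall Z, subteam Z Y -> sat g Z -> forall v, ~ Z v))
  | Neg g => forall v, X v -> ~ sat g (singleton v)
  | And g h => sat g X /\ sat h X
  | Tensor g h => exists Y Z : team,
      (forall v, X v <-> (Y v \/ Z v)) /\ sat g Y /\ sat h Z
  | Or g h => sat g X \/ sat h X
  | Imp g h => forall Y, subteam Y X -> sat g Y -> sat h Y
  end.

Definition flat (f : form) : Prop :=
  forall X : team, sat f X <-> (forall v, X v -> sat f (singleton v)).

Fixpoint subst (s : nat -> form) (f : form) {struct f} : form :=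
  match f with
  | Var p => s p
  | Bot => Bot
  | Top => Top
  | Dep l g => Dep (map (subst s) l) (subst s g)
  | Neg g => Neg (subst s g)
  | And g h => And (subst s g) (subst s h)
  | Tensor g h => Tensor (subst s g) (subst s h)
  | Or g h => Or (subst s g) (subst s h)
  | Imp g h => Imp (subst s g) (subst s h)
  end.

Definition flat_subst (s : nat -> form) : Prop := forall p, flat (s p).

(* Main.v *)
Require Import Defs.
From Stdlib Require Import List Classical ClassicalEpsilon FunctionalExtensionality PropExtensionality.
Import ListNotations.

Section S.
Variable P : form -> Prop.
Hypothesis HVar : forall p, P (Var p).
Hypothesis HBot : P Bot.
Hypothesis HTop : P Top.
Hypothesis HDep : forall l g, Forall P l -> P g -> P (Dep l g).
Hypothesis HNeg : forall g, P g -> P (Neg g).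
Hypothesis HAnd : forall g h, P g -> P h -> P (And g h).
Hypothesis HTen : forall g h, P g -> P h -> P (Tensor g h).
Hypothesis HOr : forall g h, P g -> P h -> P (Or g h).
Hypothesis HImp : forall g h, P g -> P h -> P (Imp g h).
Fixpoint form_ind2 (f : form) : P f :=
  match f with
  | Var p => HVar p
  | Bot => HBot
  | Top => HTop
  | Dep l g => HDep l g
      ((fix F (l : list form) : Forall P l :=
         match l with
         | [] => Forall_nil _
         | h :: t => Forall_cons h (form_ind2 h) (F t)
         end) l) (form_ind2 g)
  | Neg g => HNeg g (form_ind2 g)
  | And g h => HAnd g h (form_ind2 g) (form_ind2 h)
  | Tensor g h => HTen g h (form_ind2 g) (form_ind2 h)
  | Or g h => HOr g h (form_ind2 g) (form_ind2 h)
  | Imp g h => HImp g h (form_ind2 g) (form_ind2 h)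
  end.
End S.

Definition alldec (Y : team) := fix all_dec (l : list form) : Prop :=
           match l with
           | [] => True
           | h :: l' =>
               (sat h Y \/ (forall Z, subteam Z Y -> sat h Z -> forall v, ~ Z v))
               /\ all_dec l'
           end.

Definition D h Y := sat h Y \/ (forall Z, subteam Z Y -> sat h Z -> forall v, ~ Z v).

Section Main.
Variable s : nat -> form.
Hypothesis Hs : flat_subst s.

Definition gv (v : valuation) : valuation :=
  fun p => if excluded_middle_informative (sat (s p) (singleton v)) then true else false.

Definition Im (X : team) : team := fun w => exists v, X v /\ gv v = w.
Definition Pre (X Y' : team) : team := fun v => X v /\ Y' (gv v).

Lemma team_eq (X Y : team) : (forall v, X v <-> Y v) -> X = Y.
Proof. intro H; apply functional_extensionality; intro v; apply propositional_extensionality; auto. Qed.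

Lemma Im_Pre X Y' : subteam Y' (Im X) -> Im (Pre X Y') = Y'.
Proof.
  intro H; apply team_eq; intro w; split.
  - intros [v [[_ Hv] <-]]; exact Hv.
  - intro Hw. destruct (H w Hw) as [v [Xv <-]]. exists v; split; [split|]; auto.
Qed.

Lemma Pre_sub X Y' : subteam (Pre X Y') X.
Proof. intros v [H _]; exact H. Qed.

Lemma Im_mono X Y : subteam Y X -> subteam (Im Y) (Im X).
Proof. intros H w [v [Yv E]]; exists v; auto. Qed.

Lemma Im_single v : Im (singleton v) = singleton (gv v).
Proof.
  apply team_eq; intro w; unfold singleton; split.
  - intros [u [-> <-]]; reflexivity.
  - intros ->; exists v; auto.
Qed.

Definition good f := forall X, sat (subst s f) X <-> sat f (Im X).

Lemma D_good h : good h -> forall Y, D (subst s h) Y <-> D h (Im Y).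
Proof.
  intros G Y; unfold good in G; unfold D; rewrite G; split; intros [H|H]; auto; right.
  - intros Z' HZ' Hs' w Zw.
    pose proof (Im_Pre _ _ HZ') as E.
    rewrite <- E in Hs', Zw. rewrite <- G in Hs'.
    destruct Zw as [v [Pv _]].
    exact (H _ (Pre_sub _ _) Hs' v Pv).
  - intros Z HZ Hs' v Zv. rewrite G in Hs'.
    apply (H _ (Im_mono _ _ HZ) Hs' (gv v)). exists v; auto.
Qed.

Lemma alldec_good l : Forall good l -> forall Y, alldec Y (map (subst s) l) <-> alldec Y l.
Proof. Abort.

Lemma alldec_good l : Forall good l -> forall Y, alldec Y (map (subst s) l) <-> alldec (Im Y) l.
Proof.
  induction 1; intro Y; simpl. tauto.
  change (D (subst s x) Y /\ alldec Y (map (subst s) l) <-> D x (Im Y) /\ alldec (Im Y) l).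
  rewrite D_good by auto. rewrite IHForall. tauto.
Qed.

Lemma all_good f : good f.
Proof.
  induction f using form_ind2; unfold good in *; intro X; simpl.
  - rewrite (Hs p X). split.
    + intros H w [v [Xv <-]]. unfold gv.
      destruct (excluded_middle_informative _); auto.
    + intros H v Xv. specialize (H (gv v) (ex_intro _ v (conj Xv eq_refl))).
      unfold gv in H. destruct (excluded_middle_informative _); auto; discriminate.
  - split.
    + intros H w [v [Xv _]]; exact (H v Xv).
    + intros H v Xv; apply (H (gv v)); exists v; auto.
  - tauto.
  - rename H into HL.
    change ((forall Y, subteam Y X -> alldec Y (map (subst s) l) -> D (subst s f) Y) <->
            (forall Y, subteam Y (Im X) -> alldec Y l -> D f Y)).
    split.
    + intros H Y' HY' Ha.
      rewrite <- (Im_Pre _ _ HY') in Ha |- *.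
      rewrite <- D_good by exact IHf. rewrite <- alldec_good in Ha by exact HL.
      apply H; auto using Pre_sub.
    + intros H Y HY Ha. rewrite D_good by exact IHf.
      rewrite alldec_good in Ha by exact HL. apply H; auto using Im_mono.
  - split.
    + intros H w [v [Xv <-]] Hw. apply (H v Xv). rewrite IHf, Im_single; auto.
    + intros H v Xv Hv. rewrite IHf, Im_single in Hv. apply (H (gv v)); auto. exists v; auto.
  - rewrite IHf1, IHf2; tauto.
  - split.
    + intros [Y [Z [E [H1 H2]]]]. exists (Im Y), (Im Z). rewrite <- IHf1, <- IHf2.
      repeat split; auto.
      * intros [u [Xu <-]]. apply E in Xu as [Yu|Zu]; [left|right]; exists u; auto.
      * intros [[u [Yu <-]]|[u [Zu <-]]]; exists u; split; auto; apply E; auto.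
    + intros [Y' [Z' [E [H1 H2]]]].
      assert (HY : subteam Y' (Im X)) by (intros w Hw; apply E; auto).
      assert (HZ : subteam Z' (Im X)) by (intros w Hw; apply E; auto).
      exists (Pre X Y'), (Pre X Z'). rewrite IHf1, IHf2, Im_Pre, Im_Pre by auto.
      repeat split; auto.
      * intro Xv. assert (Im X (gv v)) as Hi by (exists v; auto).
        apply E in Hi as [|]; [left|right]; split; auto.
      * intros [[Xv _]|[Xv _]]; auto.
  - rewrite IHf1, IHf2; tauto.
  - split.
    + intros H Y' HY' H1. rewrite <- (Im_Pre _ _ HY') in H1 |- *.
      rewrite <- IHf2. rewrite <- IHf1 in H1. apply H; auto using Pre_sub.
    + intros H Y HY H1. rewrite IHf2. rewrite IHf1 in H1. apply H; auto using Im_mono.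
Qed.

End Main.

Theorem lemma3p6 (s : nat -> form) (phi : form) :
  flat_subst s -> flat phi -> flat (subst s phi).
Proof.
  intros Hs Hf X. pose proof (all_good s Hs phi) as G. unfold good in G.
  rewrite G, (Hf (Im s X)). split.
  - intros H v Xv. rewrite G, Im_single. apply H. exists v; auto.
  - intros H w [v [Xv <-]]. rewrite <- Im_single. rewrite <- G. auto.
Qed.
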